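(* Let $K$ be a field of characteristic $p$ with $K \neq \mathbb{F}_2$, let $S \subseteq \mathbb{N}_0$ and $m \in \mathbb{N}$. Then: (1) $mS = \{ms : s \in S\}$ is a $K$-DML set over split torus if and only if $S$ is a $K$-DML set over split torus; (2) $m + S = \{m + s : s \in S\}$ is a $K$-DML set over split torus if and only if $S$ is a $K$-DML set over split torus.
   Context: For a quasi-projective variety $X$ over $K$, a set $S \subseteq \mathbb{N}_0$ is a $K$-DML set over $X$ if there exist an endomorphism $\Phi$ of $X$ (a morphism $X \to X$ defined over $K$), a point $\alpha \in X(K)$ and a closed subvariety $V \subseteq X$ defined over $K$ (not necessarily irreducible) such that $S = \{ n \in \mathbb{N}_0 : \Phi^n(\alpha) \in V(K)\}$. $S$ is a $K$-DML set over split torus if it is a $K$-DML set over $\mathbb{G}_m^k$ for some $k \in \mathbb{N}$. $\mathbb{N}$ denotes the positive integers and $\mathbb{N}_0 = \mathbb{N}\cup\{0\}$. *)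

(* Defs.v *)
From HB Require Import structures.
From mathcomp Require Import all_boot all_order all_algebra.
From mathcomp Require Import mpoly.
Set Implicit Arguments. Unset Strict Implicit. Unset Printing Implicit Defensive.
Import Order.TTheory GRing.Theory Num.Theory.
Local Open Scope ring_scope.

(* The split torus G_m^k over a field K has coordinate ring the Laurent
   polynomial ring K[x_1^{+-1},...,x_k^{+-1}].  Every Laurent polynomial
   is written  P / (x_1 ... x_k)^e  with P a polynomial and e : nat. *)

Definition xprod (K : fieldType) (k : nat) : {mpoly K[k]} := \prod_(j < k) 'X_j.

(* A morphism G_m^k -> G_m^k defined over K is the same as a K-algebra
   endomorphism of the coordinate ring, i.e. a k-tuple of Laurent
   polynomials f_i = num i / (x_1...x_k)^(den i) each of which is a unit
   of the Laurent polynomial ring: there is a Laurent polynomial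
   g_i = q / (x_1...x_k)^d with f_i * g_i = 1, i.e.
   num i * q = (x_1...x_k)^(den i + d). *)
Definition is_torus_endo (K : fieldType) (k : nat)
  (num : 'I_k -> {mpoly K[k]}) (den : 'I_k -> nat) : Prop :=
  forall i : 'I_k, exists (q : {mpoly K[k]}) (d : nat),
    num i * q = xprod K k ^+ (den i + d).

Definition torus_map (K : fieldType) (k : nat)
  (num : 'I_k -> {mpoly K[k]}) (den : 'I_k -> nat) (a : 'I_k -> K) : 'I_k -> K :=
  fun i => (num i).@[a] / (\prod_(j < k) a j) ^+ den i.

Definition torus_point (K : fieldType) (k : nat) (a : 'I_k -> K) : Prop :=
  forall j, a j != 0.

(* S is a K-DML set over G_m^k: there are an endomorphism Phi of G_m^k
   over K, a point alpha in G_m^k(K) and a closed subvariety V of G_m^k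
   defined over K (the zero locus in G_m^k of finitely many Laurent
   polynomials; after clearing the monomial denominators, which are
   units on the torus, of finitely many polynomials) such that
   S = { n | Phi^n(alpha) \in V(K) }. *)
Definition DML_torus (K : fieldType) (k : nat) (S : nat -> Prop) : Prop :=
  exists (num : 'I_k -> {mpoly K[k]}) (den : 'I_k -> nat),
    is_torus_endo num den /\
    exists alpha : 'I_k -> K, torus_point alpha /\
    exists V : seq {mpoly K[k]},
      forall n : nat,
        S n <-> (forall P, P \in V -> P.@[iter n (torus_map num den) alpha] = 0).

Definition DML_split_torus (K : fieldType) (S : nat -> Prop) : Prop :=
  exists k : nat, (0 < k)%N /\ DML_torus K k S.

Definition scale_set (m : nat) (S : nat -> Prop) : nat -> Prop :=
  fun n => exists s, S s /\ n = (m * s)%N.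
Definition shift_set (m : nat) (S : nat -> Prop) : nat -> Prop :=
  fun n => exists s, S s /\ n = (m + s)%N.

(* Main.v *)
Require Import Defs.
From HB Require Import structures.
From mathcomp Require Import all_boot all_order all_algebra zify.
From mathcomp Require Import mpoly ssrcomplements.
From Stdlib Require Import FunctionalExtensionality IndefiniteDescription.
Set Implicit Arguments. Unset Strict Implicit. Unset Printing Implicit Defensive.
Import Order.TTheory GRing.Theory Num.Theory.
Local Open Scope ring_scope.

Section Mono.
Variable (K : fieldType) (n : nat).
Implicit Types p q : {mpoly K[n]}.

Lemma mlastcM p q : (p * q)@_(mlast p + mlast q) = p@_(mlast p) * q@_(mlast q).
Proof.
have [->|nz_p] := eqVneq p 0; first by rewrite mul0r !mcoeff0 mul0r.
have [->|nz_q] := eqVneq q 0; first by rewrite mulr0 !mcoeff0 mulr0.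
rewrite mpolyME (bigD1_seq (mlast p, mlast q)) /=; first last.
+ by rewrite allpairs_uniq => // -[? ?] [].
+ by rewrite allpairs_f// !mlast_supp.
rewrite mcoeffD mcoeffZ mcoeffX eqxx mulr1.
rewrite big_seq_cond raddf_sum /= big1 ?addr0 //.
case=> m1 m2; rewrite in_allpairs//= -andbA; case/and3P.
move=> m1_in_p m2_in_q ne; rewrite mcoeffZ mcoeffX.
have l1 := mlast_lemc m1_in_p; have l2 := mlast_lemc m2_in_q.
suff: ((mlast p + mlast q)%MM < (m1 + m2)%MM)%O by move/gt_eqF => ->; rewrite mulr0.
move: ne; rewrite xpair_eqE negb_and => /orP[ne1|ne2].
- by apply: ltmc_le_add => //; rewrite lt_neqAle l1 andbT eq_sym.
- by apply: lemc_lt_add => //; rewrite lt_neqAle l2 andbT eq_sym.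
Qed.

Lemma dvd_mono p q (c : K) mu : c != 0 -> p * q = c *: 'X_[mu] ->
  exists (c' : K) nu, c' != 0 /\ p = c' *: 'X_[nu].
Proof.
move=> nzc E.
have nzpq : p * q != 0.
  apply/negP => /eqP h; have := congr1 (mcoeff mu) E.
  by rewrite h mcoeff0 mcoeffZ mcoeffX eqxx mulr1 => /esym/eqP; rewrite (negbTE nzc).
have nz_p : p != 0 by apply: contraNneq nzpq => ->; rewrite mul0r.
have nz_q : q != 0 by apply: contraNneq nzpq => ->; rewrite mulr0.
have hsupp : msupp (p*q) = [:: mu] by rewrite E msuppMCX.
have hlast : (mlast p + mlast q)%MM = mu.
  have: (mlast p + mlast q)%MM \in msupp (p*q).
    by rewrite mcoeff_msupp mlastcM mulf_neq0 // -mcoeff_msupp mlast_supp.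
  by rewrite hsupp inE => /eqP.
have hlead : (mlead p + mlead q)%MM = mu by rewrite -mleadM // E mleadZ // mleadXm.
have lp : (mlast p <= mlead p)%O := msupp_le_mlead (mlast_supp nz_p).
have lq : (mlast q <= mlead q)%O := msupp_le_mlead (mlast_supp nz_q).
have eqp : mlast p = mlead p.
  apply/eqP; apply: contraT => ne.
  have : ((mlast p + mlast q)%MM < (mlead p + mlead q)%MM)%O.
    by apply: ltmc_le_add => //; rewrite lt_neqAle ne lp.
  by rewrite hlast hlead ltxx.
exists p@_(mlead p), (mlead p); split; first by rewrite mleadc_eq0.
apply/mpolyP => m; rewrite mcoeffZ mcoeffX.
have [<-|ne] := eqVneq (mlead p) m; first by rewrite mulr1.
rewrite mulr0; apply/eqP; rewrite -[_ == 0]negbK -mcoeff_msupp; apply/negP => hm.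
have h1 := mlast_lemc hm; have h2 := msupp_le_mlead hm.
rewrite eqp in h1.
have : m = mlead p by apply/le_anti; rewrite h1 h2.
by move=> e; rewrite e eqxx in ne.
Qed.

End Mono.

Lemma fchoice (A B : Type) (R : A -> B -> Prop) :
  (forall x, exists y, R x y) -> exists f, forall x, R x (f x).
Proof.
move=> H; exists (fun x => proj1_sig (constructive_indefinite_description _ (H x))).
by move=> x; case: (constructive_indefinite_description _ (H x)).
Qed.

Section Good.
Variable K : fieldType.

Definition goodc k (h : ('I_k -> K) -> K) := exists (c : K) (z : 'I_k -> int),
  c != 0 /\ forall a, torus_point a -> h a = c * \prod_j a j ^ z j.
Definition goodm k (f : ('I_k -> K) -> 'I_k -> K) := forall i, goodc (fun a => f a i).

Lemma prod_neq0 k (a : 'I_k -> K) (z : 'I_k -> int) :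
  torus_point a -> \prod_j a j ^ z j != 0.
Proof.
move=> ha; apply: (big_ind (fun x => x != 0)); first exact: oner_neq0.
  by move=> x y; apply: mulf_neq0.
by move=> j _; apply: expfz_neq0.
Qed.

Lemma goodc_neq0 k h (a : 'I_k -> K) : goodc h -> torus_point a -> h a != 0.
Proof. by case=> c [z [nzc H]] ha; rewrite H // mulf_neq0 // prod_neq0. Qed.

Lemma goodm_torus k f (a : 'I_k -> K) : goodm f -> torus_point a -> torus_point (f a).
Proof. by move=> hf ha i; apply: (goodc_neq0 (hf i)). Qed.

Lemma goodc_gen k (T : finType) (g : T -> 'I_k) (w : T -> int) (c : K) :
  c != 0 -> goodc (fun a => c * \prod_(x : T) a (g x) ^ w x).
Proof.
move=> nzc; exists c, (fun j => \sum_(x | g x == j) w x); split => // a ha.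
congr (_ * _).
rewrite (partition_big g xpredT) //=.
apply: eq_bigr => j _.
rewrite (big_morph (fun z => a j ^ z) (fun z1 z2 => @expfzDr _ (a j) z1 z2 (ha j)) (expr0z _)).
by apply: eq_big => [x //|x /eqP <-].
Qed.

Lemma goodc_proj k (j : 'I_k) : goodc (fun a => a j).
Proof.
have [c [z [nzc H]]] := goodc_gen (fun _ : 'I_1 => j) (fun _ => 1) (oner_neq0 K).
exists c, z; split=> // a ha; by rewrite -H // big_ord1 expr1z mul1r.
Qed.

Lemma goodc_pull k k' (h : ('I_k -> K) -> K) (g : 'I_k -> 'I_k') :
  goodc h -> goodc (fun a => h (fun i => a (g i))).
Proof.
case=> c [z [nzc H]].
have [c' [z' [nz' H']]] := goodc_gen g z nzc.
exists c', z'; split=> // a ha; rewrite H; last by move=> i; exact: ha.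
exact: H'.
Qed.

Lemma goodm_coefs k f : @goodm k f -> exists (c : 'I_k -> K) (Z : 'I_k -> 'I_k -> int),
  (forall i, c i != 0) /\ forall a, torus_point a -> forall i, f a i = c i * \prod_j a j ^ Z i j.
Proof.
move=> hf.
have [F HF] := @fchoice _ _ (fun i (p : K * ('I_k -> int)) => p.1 != 0 /\
   forall a, torus_point a -> f a i = p.1 * \prod_j a j ^ p.2 j)
  (fun i => let: ex_intro c (ex_intro z H) := hf i in ex_intro _ (c, z) H).
exists (fun i => (F i).1), (fun i => (F i).2); split.
  by move=> i; case: (HF i).
by move=> a ha i; case: (HF i) => _ ->.
Qed.

Lemma goodc_comp k h f : @goodc k h -> goodm f -> goodc (fun a => h (f a)).
Proof.
case=> c [z [nzc Hh]] hf.
have [cf [Z [nzf Hf]]] := goodm_coefs hf.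
have nzc' : c * \prod_i cf i ^ z i != 0.
  rewrite mulf_neq0 //; apply: (big_ind (fun x => x != 0)); first exact: oner_neq0.
    by move=> x y; apply: mulf_neq0.
  by move=> j _; apply: expfz_neq0.
have [c' [z' [nz' H']]] := goodc_gen (fun p : 'I_k * 'I_k => p.2)
   (fun p => Z p.1 p.2 * z p.1) nzc'.
exists c', z'; split=> // a ha; rewrite -H' // Hh; last exact: goodm_torus.
rewrite -mulrA; congr (_ * _).
rewrite -(pair_big xpredT xpredT (fun i j => a j ^ (Z i j * z i))) /= -big_split /=.
apply: eq_bigr => i _.
rewrite Hf // expfzMl; congr (_ * _).
rewrite (big_morph (fun x => x ^ z i) (fun x y => expfzMl x y (z i)) (exp1rz _ _)).
by apply: eq_bigr => j _; rewrite exprz_exp.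
Qed.

Lemma goodm_comp k (f g : ('I_k -> K) -> 'I_k -> K) :
  goodm f -> goodm g -> goodm (fun a => g (f a)).
Proof. by move=> hf hg i; apply: (goodc_comp (hg i) hf). Qed.

Lemma goodm_iter k (f : ('I_k -> K) -> 'I_k -> K) n : goodm f -> goodm (iter n f).
Proof.
move=> hf; elim: n => [|n IH]; first by move=> i; exact: goodc_proj.
exact: (goodm_comp IH hf).
Qed.

Lemma mono_eval k (c : K) (mu : 'X_{1..k}) (d : nat) (a : 'I_k -> K) :
  torus_point a ->
  (c *: 'X_[mu]).@[a] / (\prod_j a j) ^+ d = c * \prod_j a j ^ ((mu j)%:Z - d%:Z).
Proof.
move=> ha; rewrite mevalZ mevalX -mulrA; congr (_ * _).
rewrite -prodrXl -prodf_div; apply: eq_bigr => j _.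
by rewrite expfzDr ?ha // -exprnN.
Qed.

Lemma endo_good k num den : @is_torus_endo K k num den -> goodm (torus_map num den).
Proof.
move=> he i; have [q [d E]] := he i.
have E' : num i * q = 1 *: 'X_[[multinom (den i + d)%N | _ < k]].
  rewrite E scale1r mpolyXE_id /xprod -prodrXl; apply: eq_bigr => j _.
  by rewrite mnmE.
have [c [nu [nzc Hn]]] := dvd_mono (oner_neq0 _) E'.
exists c, (fun j => (nu j)%:Z - (den i)%:Z); split => // a ha.
by rewrite /torus_map Hn mono_eval.
Qed.

Lemma good_endo k f : @goodm k f -> exists num den, @is_torus_endo K k num den /\
  forall a, torus_point a -> forall i, torus_map num den a i = f a i.
Proof.
move=> hf; have [c [Z [nzc Hf]]] := goodm_coefs hf.
pose N i := (\sum_j absz (Z i j))%N.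
have hb : forall i j, (absz (Z i j) <= N i)%N.
  by move=> i j; rewrite /N (bigD1 j) //= leq_addr.
pose mu i := [multinom absz (Z i j + (N i)%:Z)%R | j < k].
exists (fun i => c i *: 'X_[mu i]), N; split.
  move=> i; exists ((c i)^-1 *: 'X_[[multinom absz ((N i)%:Z - Z i j)%R | j < k]]), (N i).
  rewrite -scalerAl -scalerAr scalerA divff // scale1r -mpolyXD.
  rewrite /xprod -prodrXl mpolyXE_id; apply: eq_bigr => j _; congr (_ ^+ _).
  rewrite mnmDE !mnmE; have := hb i j; lia.
move=> a ha i; rewrite /torus_map mono_eval // Hf //; congr (_ * _).
apply: eq_bigr => j _; congr (_ ^ _); rewrite mnmE; have := hb i j; lia.
Qed.

Definition DMLg k (S : nat -> Prop) := exists f : ('I_k -> K) -> 'I_k -> K, goodm f /\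
  exists alpha, torus_point alpha /\ exists V : seq {mpoly K[k]},
  forall n, S n <-> (forall P, P \in V -> P.@[iter n f alpha] = 0).

Lemma iter_agree k (f g : ('I_k -> K) -> 'I_k -> K) a n : goodm f ->
  (forall b, torus_point b -> g b = f b) -> torus_point a ->
  iter n g a = iter n f a /\ torus_point (iter n f a).
Proof.
move=> hf hgf ha; elim: n => [|n [IH T]] //=.
rewrite IH; split; [exact: hgf | exact: goodm_torus].
Qed.

Lemma DMLg_torus k S : DML_torus K k S <-> DMLg k S.
Proof.
split.
  case=> num [den [he [al [hal [V hV]]]]].
  exists (torus_map num den); split; first exact: endo_good.
  by exists al; split => //; exists V.
case=> f [hf [al [hal [V hV]]]].
have [num [den [he hnd]]] := good_endo hf.
exists num, den; split => //; exists al; split => //; exists V => n.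
rewrite (iter_agree n hf _ hal).1 //.
by move=> b hb; apply: functional_extensionality => i; exact: hnd.
Qed.

Lemma iter_mul T (f : T -> T) m n x : iter n (iter m f) x = iter (m * n) f x.
Proof. elim: n => [|n IH]; first by rewrite muln0. by rewrite mulnS iterD -IH. Qed.

Lemma DMLg_scale_inv k m S : (0 < m)%N -> DMLg k (scale_set m S) -> DMLg k S.
Proof.
move=> hm [f [hf [al [hal [V hV]]]]].
exists (iter m f); split; first exact: goodm_iter.
exists al; split => //; exists V => n; rewrite iter_mul -hV.
split => [Sn|[s [Ss e]]]; first by exists n.
have -> : n = s by apply/eqP; rewrite -(eqn_pmul2l hm) e.
exact: Ss.
Qed.

Lemma DMLg_shift_inv k m S : DMLg k (shift_set m S) -> DMLg k S.
Proof.
move=> [f [hf [al [hal [V hV]]]]].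
exists f; split => //; exists (iter m f al); split.
  exact: (iter_agree m hf (fun b _ => erefl) hal).2.
exists V => n; rewrite -iterD addnC -hV.
split => [Sn|[s [Ss e]]]; first by exists n.
have -> : n = s by apply/eqP; rewrite -(eqn_add2l m) e.
exact: Ss.
Qed.

End Good.

Section Block.
Variable K : fieldType.

Definition bstep k M (Phi : ('I_k -> K) -> 'I_k -> K) (sig : 'I_M -> 'I_M) (j0 : 'I_M)
  (b : 'I_M * option 'I_k -> K) : 'I_M * option 'I_k -> K :=
  fun x => match x with
  | (j, None) => b (sig j, None)
  | (j, Some i) => if j == j0 then Phi (fun i' => b (sig j, Some i')) i
                   else b (sig j, Some i)
  end.

Definition bmap k M (Phi : ('I_k -> K) -> 'I_k -> K) (sig : 'I_M -> 'I_M) (j0 : 'I_M)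
  (a : 'I_#|{: 'I_M * option 'I_k}| -> K) : 'I_#|{: 'I_M * option 'I_k}| -> K :=
  fun i => bstep Phi sig j0 (fun x => a (enum_rank x)) (enum_val i).

Lemma bmap_iter k M Phi sig j0 n a x :
  iter n (@bmap k M Phi sig j0) a (enum_rank x) =
  iter n (bstep Phi sig j0) (fun y => a (enum_rank y)) x.
Proof.
elim: n x => [|n IH] x //=.
rewrite /bmap enum_rankK.
have -> : (fun y => iter n (bmap Phi sig j0) a (enum_rank y)) =
          iter n (bstep Phi sig j0) (fun y => a (enum_rank y)).
  by apply: functional_extensionality => y; exact: IH.
by [].
Qed.

Lemma bmap_good k M Phi sig j0 : goodm Phi -> goodm (@bmap k M Phi sig j0).
Proof.
move=> hP i; rewrite /bmap.
case: (enum_val i) => j [i'|] /=; last exact: goodc_proj.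
case: (j == j0); last exact: goodc_proj.
exact: (goodc_pull (fun i'' => enum_rank (sig j, Some i'')) (hP i')).
Qed.

Lemma block_DML k M (Phi : ('I_k -> K) -> 'I_k -> K) sig j0 (jout : 'I_M)
  (init : 'I_M * option 'I_k -> K) (V : seq {mpoly K[k]}) (U : nat -> Prop) :
  (0 < M)%N -> goodm Phi -> (forall x, init x != 0) ->
  (forall n, U n <-> (iter n (bstep Phi sig j0) init (jout, None) = 1 /\
     forall P, P \in V -> P.@[fun i => iter n (bstep Phi sig j0) init (jout, Some i)] = 0)) ->
  DML_split_torus K U.
Proof.
move=> hM hP hinit hU.
exists #|{: 'I_M * option 'I_k}|; split.
  by apply/card_gt0P; exists (Ordinal hM, None).
apply/DMLg_torus; exists (bmap Phi sig j0); split; first exact: bmap_good.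
exists (fun i => init (enum_val i)); split; first by move=> i; exact: hinit.
exists ('X_(enum_rank (jout, None)) - 1 ::
        [seq P \mPo [tuple 'X_(enum_rank (jout, Some i)) | i < k] | P <- V]) => n.
have Hit : forall x, iter n (bmap Phi sig j0) (fun i => init (enum_val i)) (enum_rank x)
                     = iter n (bstep Phi sig j0) init x.
  move=> x; rewrite bmap_iter; congr (iter _ _ _ _).
  by apply: functional_extensionality => y; rewrite enum_rankK.
rewrite hU; split.
- move=> [H1 H2] P; rewrite inE => /orP [/eqP -> | /mapP [Q QV ->]].
    by rewrite mevalB mevalXU meval1 Hit H1 subrr.
  rewrite comp_mpoly_meval -(H2 Q QV); apply: meval_eq => i.
  by rewrite tnth_mktuple mevalXU Hit.
- move=> H; split.
    have := H _ (mem_head _ _).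
    by rewrite mevalB mevalXU meval1 Hit => /eqP; rewrite subr_eq0 => /eqP.
  move=> Q QV; have := H (Q \mPo [tuple 'X_(enum_rank (jout, Some i)) | i < k]).
  rewrite inE map_f ?orbT // => /(_ isT) <-.
  rewrite comp_mpoly_meval; apply: meval_eq => i.
  by rewrite tnth_mktuple mevalXU Hit.
Qed.

End Block.

Section Closed.
Variable K : fieldType.

Lemma bstep_None k M Phi sig j0 b j :
  @bstep K k M Phi sig j0 b (j, None) = b (sig j, None).
Proof. by []. Qed.
Lemma bstep_Some k M Phi sig j0 b j i :
  @bstep K k M Phi sig j0 b (j, Some i) =
  if j == j0 then Phi (fun i' => b (sig j, Some i')) i else b (sig j, Some i).
Proof. by []. Qed.

Definition sinit k m (al : 'I_k -> K) (x : K) : 'I_m * option 'I_k -> K :=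
  fun y => match y with
  | (j, None) => if (val j == 0)%N then 1 else x
  | (j, Some i) => al i end.

Lemma scale_closed k m' (Phi : ('I_k -> K) -> 'I_k -> K) al x n : forall j : 'I_m'.+1,
  iter n (bstep Phi (@ordS _) ord_max) (sinit al x) (j, None) =
     (if ((j + n) %% m'.+1 == 0)%N then 1 else x) /\
  forall i, iter n (bstep Phi (@ordS _) ord_max) (sinit al x) (j, Some i) =
     iter ((j + n) %/ m'.+1)%N Phi al i.
Proof.
elim: n => [|n IH] j.
  by rewrite addn0 modn_small ?divn_small.
split.
  have [IH1 _] := IH (ordS j).
  by rewrite iterS bstep_None IH1 /= modnDml addSn addnS.
move=> i; rewrite iterS bstep_Some.
case: (eqVneq j ord_max) => [->|ne].
  have [_ IH2] := IH (ordS ord_max).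
  have -> : (fun i' => iter n (bstep Phi (@ordS m'.+1) ord_max) (sinit al x) (ordS ord_max, Some i'))
            = iter ((ordS (@ord_max m') + n) %/ m'.+1)%N Phi al.
    by apply: functional_extensionality => i'; exact: IH2.
  have -> : (ordS (@ord_max m') : nat) = 0%N by rewrite /= modnn.
  rewrite add0n /= (_ : (m' + n.+1) %/ m'.+1 = (n %/ m'.+1).+1)%N //.
  by rewrite addnS -addSn -{1}(mul1n m'.+1) divnMDl // add1n.
have [_ IH2] := IH (ordS j); rewrite IH2.
have hj : (j < m')%N.
  have := ltn_ord j; rewrite ltnS leq_eqVlt => /orP [/eqP h|//].
  by case/eqP: ne; apply/val_inj.
have -> : (ordS j : nat) = j.+1 by rewrite /= modn_small.
by rewrite addSn addnS.
Qed.

Lemma scale_DML k m S (x : K) : x != 0 -> x != 1 -> (0 < m)%N ->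
  DMLg K k S -> DML_split_torus K (scale_set m S).
Proof.
move=> nx0 nx1 hm [f [hf [al [hal [V hV]]]]].
case: m hm => [//|m'] _.
apply: (@block_DML K k m'.+1 f (@ordS m'.+1) ord_max ord0 (sinit al x) V (scale_set m'.+1 S)) => //.
  case=> j [i|] /=; first exact: hal.
  by case: ifP => _; rewrite ?oner_neq0.
move=> n; have [H1 H2] := @scale_closed k m' f al x n ord0.
rewrite H1 add0n.
have -> : (fun i => iter n (bstep f (@ordS m'.+1) ord_max) (sinit al x) (ord0, Some i))
          = iter (n %/ m'.+1)%N f al.
  by apply: functional_extensionality => i; rewrite H2 add0n.
split.
  case=> s [Ss ->]; rewrite modnMr eqxx mulKn //; split => //; exact/hV.
case; case: eqP => [hmod _ hv | _ hx1]; last by rewrite hx1 eqxx in nx1.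
exists (n %/ m'.+1)%N; split; first exact/hV.
by rewrite mulnC divnK // /dvdn hmod.
Qed.

Lemma shift_closed k m (Phi : ('I_k -> K) -> 'I_k -> K) al x n : forall j : 'I_m.+1,
  iter n (bstep Phi (fun j : 'I_m.+1 => inord j.-1) ord0) (sinit al x) (j, None) =
     (if (j <= n)%N then 1 else x) /\
  forall i, iter n (bstep Phi (fun j : 'I_m.+1 => inord j.-1) ord0) (sinit al x) (j, Some i) =
     iter (n - j) Phi al i.
Proof.
elim: n => [|n IH] j.
  by rewrite leqn0 sub0n.
have hval : forall j : 'I_m.+1, ((inord j.-1 : 'I_m.+1) : nat) = j.-1.
  move=> j'; rewrite inordK //; exact: (leq_ltn_trans (leq_pred j') (ltn_ord j')).
split.
  have [IH1 _] := IH (inord j.-1).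
  rewrite iterS bstep_None IH1 hval; congr (if _ then _ else _).
  by case: (nat_of_ord j).
move=> i; rewrite iterS bstep_Some.
case: (eqVneq j ord0) => [->|ne].
  have [_ IH2] := IH (inord (@ord0 m).-1).
  have -> : (fun i' => iter n (bstep Phi (fun j : 'I_m.+1 => inord j.-1) ord0) (sinit al x)
                 (inord (@ord0 m).-1, Some i'))
            = iter n Phi al.
    by apply: functional_extensionality => i'; rewrite IH2 hval subn0.
  by rewrite subn0.
have [_ IH2] := IH (inord j.-1); rewrite IH2 hval.
have hj : (0 < j)%N.
  rewrite lt0n; apply: contraNneq ne => h; by apply/eqP; apply: val_inj; rewrite /= h.
by congr (iter _ _ _ _); lia.
Qed.

Lemma shift_DML k m S (x : K) : x != 0 -> x != 1 ->
  DMLg K k S -> DML_split_torus K (shift_set m S).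
Proof.
move=> nx0 nx1 [f [hf [al [hal [V hV]]]]].
apply: (@block_DML K k m.+1 f (fun j : 'I_m.+1 => inord j.-1) ord0 ord_max (sinit al x) V (shift_set m S)) => //.
  case=> j [i|] /=; first exact: hal.
  by case: ifP => _; rewrite ?oner_neq0.
move=> n; have [H1 H2] := @shift_closed k m f al x n ord_max.
rewrite H1.
have -> : (fun i => iter n (bstep f (fun j : 'I_m.+1 => inord j.-1) ord0) (sinit al x)
                      (ord_max, Some i))
          = iter (n - m)%N f al.
  by apply: functional_extensionality => i; rewrite H2.
split.
  case=> s [Ss ->]; rewrite leq_addr addKn; split => //; exact/hV.
case; case: ifP => [hle _ hv | _ hx1]; last by rewrite hx1 eqxx in nx1.
exists (n - m)%N; split; first exact/hV.
by rewrite subnKC.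
Qed.

End Closed.

Unset Implicit Arguments. Set Strict Implicit.

Theorem lemma2p3 (K : fieldType)
  (hK : exists x : K, x != 0 /\ x != 1)
  (S : nat -> Prop) (m : nat) (hm : (0 < m)%N) :
  (DML_split_torus K (scale_set m S) <-> DML_split_torus K S) /\
  (DML_split_torus K (shift_set m S) <-> DML_split_torus K S).
Proof.
have [x [nx0 nx1]] := hK.
split; split.
- case=> k [hk /DMLg_torus D]; exists k; split => //.
  by apply/DMLg_torus; exact: DMLg_scale_inv hm D.
- by case=> k [hk /DMLg_torus D]; exact: scale_DML nx0 nx1 hm D.
- case=> k [hk /DMLg_torus D]; exists k; split => //.
  by apply/DMLg_torus; exact: DMLg_shift_inv D.
- by case=> k [hk /DMLg_torus D]; exact: shift_DML nx0 nx1 D.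
Qed.
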